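(* Let $t\ge2$ be an integer and let $\chi_t$ be as in the context. Then: (i) for every integer $n$ with $\chi_t(n)\neq 0$, the number $\frac{n^2-(2^{t+1}-3)^2}{3\cdot 2^{t+2}}$ is an integer; and (ii) for each root of unity $\zeta$, the function $n\mapsto \zeta^{\frac{n^2-(2^{t+1}-3)^2}{3\cdot 2^{t+2}}}\chi_t(n)$ (taken to be $0$ when $\chi_t(n)=0$) is periodic and has mean value zero.
   Context: Define $\chi_t:\mathbb{Z}\to\{0,\pm1\}$, periodic modulo $3\cdot2^{t+1}$, by $\chi_t(n)=1$ if $n\equiv 2^{t+1}-3$ or $3+2^{t+2}\pmod{3\cdot 2^{t+1}}$, $\chi_t(n)=-1$ if $n\equiv 2^{t+1}+3$ or $2^{t+2}-3\pmod{3\cdot2^{t+1}}$, and $\chi_t(n)=0$ otherwise. A periodic function has mean value zero if its sum over a full period is zero. *)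

(* Defs.v *)
From mathcomp Require Import all_boot all_order all_algebra all_field.
Set Implicit Arguments. Unset Strict Implicit. Unset Printing Implicit Defensive.
Import Order.TTheory GRing.Theory Num.Theory.
Local Open Scope ring_scope.

Definition chi (t : nat) (n : int) : int :=
  let M : int := 3 * 2 ^+ t.+1 in
  if ((n == 2 ^+ t.+1 - 3 %[mod M])%Z || (n == 3 + 2 ^+ t.+2 %[mod M])%Z) then 1
  else if ((n == 2 ^+ t.+1 + 3 %[mod M])%Z || (n == 2 ^+ t.+2 - 3 %[mod M])%Z)
  then -1 else 0.

(* the exponent (n^2 - (2^(t+1)-3)^2) / (3 * 2^(t+2)) (Euclidean quotient;
   exact whenever chi t n <> 0, by part (i)) *)
Definition expo (t : nat) (n : int) : int :=
  ((n ^+ 2 - (2 ^+ t.+1 - 3) ^+ 2) %/ (3 * 2 ^+ t.+2))%Z.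

Definition twisted (t : nat) (zeta : algC) (n : int) : algC :=
  if chi t n == 0 then 0 else zeta ^ (expo t n) * (chi t n)%:~R.

(* Main.v *)
Require Import Defs.
From mathcomp Require Import all_boot all_order all_algebra all_field.
From mathcomp Require Import ring zify cyclic.
Import Order.TTheory GRing.Theory Num.Theory.
Local Open Scope ring_scope.
Definition chiw (w n : int) : int :=
  if (6*w %| n - (2*w-3))%Z || (6*w %| n - (3+4*w))%Z then 1
  else if (6*w %| n - (2*w+3))%Z || (6*w %| n - (4*w-3))%Z then -1 else 0.

Definition expw (w n : int) : int := ((n ^+ 2 - (2*w - 3) ^+ 2) %/ (12 * w))%Z.

Lemma dvd_shift (d x y r : int) : (d %| x - y)%Z -> (d %| x - r)%Z = (d %| y - r)%Z.
Proof.
move=> h; have -> : x - r = (x - y) + (y - r) by ring.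
by rewrite rpredDl.
Qed.

Lemma chiw_congr w m n : (6*w %| m - n)%Z -> chiw w m = chiw w n.
Proof. by move=> h; rewrite /chiw !(dvd_shift _ _ _ _ h). Qed.

Lemma notdvd (M d : int) : 0 < d -> d < M -> ~~ (M %| d)%Z.
Proof. move=> h1 h2; apply/negP => /dvdzP [q hq].
have [hq0|hq0] := lerP q 0.
  have : q * M <= 0 by rewrite pmulr_lle0 // (lt_trans h1 h2).
  lia.
have : M <= q * M by rewrite ler_pMl ?(lt_trans h1 h2) //; lia.
lia. Qed.

Lemma chiw_ex w n : chiw w n != 0 -> exists r Q j,
  n = r + j * (6*w) /\ r ^+ 2 - (2*w-3) ^+ 2 = Q * (12 * w).
Proof.
rewrite /chiw.
have H : forall r Q, (6*w %| n - r)%Z -> r ^+ 2 - (2*w-3) ^+ 2 = Q * (12 * w) ->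
  exists r Q j, n = r + j * (6*w) /\ r ^+ 2 - (2*w-3) ^+ 2 = Q * (12 * w).
  move=> r Q /dvdzP [j hj] hQ; exists r, Q, j; split => //.
  by rewrite -hj; ring.
case: (boolP (6*w %| n - (2*w-3))%Z) => h1 /=.
  by move=> _; apply: (H _ 0 h1); ring.
case: (boolP (6*w %| n - (3+4*w))%Z) => h2 /=.
  by move=> _; apply: (H _ (w+3) h2); ring.
case: (boolP (6*w %| n - (2*w+3))%Z) => h3 /=.
  by move=> _; apply: (H _ 2 h3); ring.
case: (boolP (6*w %| n - (4*w-3))%Z) => h4 /=.
  by move=> _; apply: (H _ (w-1) h4); ring.
by [].
Qed.

Lemma expw_exact w n : w != 0 -> chiw w n != 0 ->
  expw w n * (12 * w) = n ^+ 2 - (2*w-3) ^+ 2.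
Proof.
move=> w0 /chiw_ex [r [Q [j [-> hQ]]]].
have -> : (r + j * (6 * w)) ^+ 2 - (2 * w - 3) ^+ 2
   = (Q + r * j + 3 * w * j ^+ 2) * (12 * w).
  have -> : (r + j * (6 * w)) ^+ 2 - (2 * w - 3) ^+ 2
    = (r ^+ 2 - (2*w-3) ^+ 2) + (r * j + 3 * w * j ^+ 2) * (12 * w) by ring.
  by rewrite hQ; ring.
rewrite /expw.
have -> : (r + j * (6 * w)) ^+ 2 - (2 * w - 3) ^+ 2
   = (Q + r * j + 3 * w * j ^+ 2) * (12 * w).
  have -> : (r + j * (6 * w)) ^+ 2 - (2 * w - 3) ^+ 2
    = (r ^+ 2 - (2*w-3) ^+ 2) + (r * j + 3 * w * j ^+ 2) * (12 * w) by ring.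
  by rewrite hQ; ring.
by rewrite mulzK // mulf_neq0.
Qed.

Lemma cls_L w L n c d : coprimez 3 (2*w) -> (2*w %| L+1)%Z -> (3 %| L-1)%Z ->
  (2*w %| c + d)%Z -> (3 %| c - d)%Z ->
  (6*w %| L*n - c)%Z = (6*w %| n - d)%Z.
Proof.
move=> cop hL2 hL3 hcd2 hcd3.
have -> : 6 * w = 3 * (2 * w) by ring.
rewrite Gauss_dvdz // [in RHS]Gauss_dvdz //; congr (_ && _).
  have -> : L * n - c = (L - 1) * n + (n - d) - (c - d) by ring.
  by rewrite rpredBr // rpredDl // dvdz_mulr.
have -> : L * n - c = (L + 1) * n + (- (n - d)) - (c + d) by ring.
by rewrite rpredBr // rpredDl // ?dvdz_mulr // rpredN.
Qed.

Lemma disj w n a b : (6*w %| n - a)%Z -> (6*w %| n - b)%Z -> (6*w %| b - a)%Z.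
Proof.
move=> ha hb; have -> : b - a = (n - a) - (n - b) by ring.
by rewrite rpredB.
Qed.

Lemma chiw_L w L n : 4 <= w -> coprimez 3 (2*w) -> (2*w %| L+1)%Z -> (3 %| L-1)%Z ->
  chiw w (L * n) = - chiw w n.
Proof.
move=> w4 cop h2 h3.
have C : forall c d, (2*w %| c + d)%Z -> (3 %| c - d)%Z ->
   (6*w %| L*n - c)%Z = (6*w %| n - d)%Z.
  by move=> c d; apply: cls_L.
rewrite /chiw (C (2*w-3) (2*w+3)); last 2 first.
- by apply/dvdzP; exists 2; ring.
- by apply/dvdzP; exists (-2); ring.
rewrite (C (3+4*w) (4*w-3)); last 2 first.
- by apply/dvdzP; exists 4; ring.
- by apply/dvdzP; exists 2; ring.
rewrite (C (2*w+3) (2*w-3)); last 2 first.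
- by apply/dvdzP; exists 2; ring.
- by apply/dvdzP; exists 2; ring.
rewrite (C (4*w-3) (3+4*w)); last 2 first.
- by apply/dvdzP; exists 4; ring.
- by apply/dvdzP; exists (-2); ring.
have N1 : forall a b, 0 < b - a -> b - a < 6 * w ->
   (6*w %| n - a)%Z -> (6*w %| n - b)%Z -> False.
  move=> a b hp hl ha hb; move: (disj _ _ _ _ ha hb); apply/negP; exact: notdvd hp hl.
have i1 : 0 < 6 :> int by [].
have i2 : (6:int) < 6 * w by clear -w4; lia.
have i3 : 0 < 2 * w by clear -w4; lia.
have i4 : 2 * w < 6 * w by clear -w4; lia.
have e1 : (2*w+3) - (2*w-3) = 6 by ring.
have e2 : (4*w-3) - (2*w-3) = 2 * w by ring.
have e3 : (3+4*w) - (2*w+3) = 2 * w by ring.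
have e4 : (3+4*w) - (4*w-3) = 6 by ring.
case: (boolP (6*w %| n - (2*w-3))%Z) => k1;
case: (boolP (6*w %| n - (3+4*w))%Z) => k2;
case: (boolP (6*w %| n - (2*w+3))%Z) => k3;
case: (boolP (6*w %| n - (4*w-3))%Z) => k4; rewrite /=.
all: try (rewrite ?opprK ?oppr0; reflexivity).
all: exfalso.
all: first [ by apply: (N1 _ _ _ _ k1 k3); rewrite e1
           | by apply: (N1 _ _ _ _ k1 k4); rewrite e2
           | by apply: (N1 _ _ _ _ k3 k2); rewrite e3
           | by apply: (N1 _ _ _ _ k4 k2); rewrite e4 ].
Qed.

Definition twistedw (w : int) (zeta : algC) (n : int) : algC :=
  if chiw w n == 0 then 0 else zeta ^ (expw w n) * (chiw w n)%:~R.

Lemma zeta_shift (zeta : algC) (k : nat) (Z x y : int) : (0 < k)%N -> zeta ^+ k = 1 ->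
  x - y = k%:Z * Z -> zeta ^ x = zeta ^ y.
Proof.
move=> k0 hk hxy.
have z0 : zeta != 0.
  by apply/negP => z0; move: (expf_eq0 zeta k); rewrite hk k0 z0 oner_eq0.
have -> : x = y + k%:Z * Z by rewrite -hxy; ring.
by rewrite expfzDr // -exprz_exp -exprnP hk exp1rz mulr1.
Qed.

Lemma twist_per w (zeta : algC) (k : nat) n : 0 < w -> (0 < k)%N -> zeta ^+ k = 1 ->
  twistedw w zeta (n + 12 * w * k%:Z) = twistedw w zeta n.
Proof.
move=> w0 k0 hk.
have hc : chiw w (n + 12 * w * k%:Z) = chiw w n.
  by apply: chiw_congr; apply/dvdzP; exists (2 * k%:Z); ring.
rewrite /twistedw hc; case: eqP => // /eqP c0.
have wn0 : w != 0 by rewrite gt_eqF.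
congr (_ * _); apply: (zeta_shift _ _ (2 * n + 12 * w * k%:Z) _ _ k0 hk).
have h12 : 12 * w != 0 by rewrite mulf_neq0.
apply: (mulIf h12).
rewrite mulrBl expw_exact //; last by rewrite hc.
rewrite expw_exact //; ring.
Qed.

Lemma twist_L w (zeta : algC) (k : nat) L n : 4 <= w -> coprimez 3 (2*w) ->
  (2*w %| L+1)%Z -> (3 %| L-1)%Z -> (0 < k)%N -> zeta ^+ k = 1 ->
  (12 * w * k%:Z %| L ^+ 2 - 1)%Z ->
  twistedw w zeta (L * n) = - twistedw w zeta n.
Proof.
move=> w4 cop h2 h3 k0 hk /dvdzP [Y hY].
have hc := chiw_L w L n w4 cop h2 h3.
have w0 : w != 0 by apply/negP => /eqP w0; move: w4; rewrite w0.
rewrite /twistedw hc oppr_eq0; case: eqP => [_|/eqP c0]; first by rewrite oppr0.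
rewrite rmorphN mulrN; congr (- (_ * _)).
apply: (zeta_shift _ _ (Y * n ^+ 2) _ _ k0 hk).
have h12 : 12 * w != 0 by rewrite mulf_neq0.
apply: (mulIf h12).
rewrite mulrBl expw_exact //; last by rewrite hc oppr_eq0.
rewrite expw_exact //.
have -> : (L * n) ^+ 2 - (2 * w - 3) ^+ 2 - (n ^+ 2 - (2 * w - 3) ^+ 2)
  = (L ^+ 2 - 1) * n ^+ 2 by ring.
rewrite hY; ring.
Qed.

Lemma per_nat (f : int -> algC) (Q : nat) : (forall n, f (n + Q%:Z) = f n) ->
  forall c n, f (n + (Q * c)%N%:Z) = f n.
Proof.
move=> hf; elim=> [|c IH] n; first by rewrite muln0 addr0.
by rewrite mulnS PoszD [Q%:Z + _]addrC addrA hf IH.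
Qed.

Lemma sum_mult (f : int -> algC) (Q : nat) c : (forall n, f (n + Q%:Z) = f n) ->
  \sum_(0 <= i < Q * c) f i%:Z = (\sum_(0 <= i < Q) f i%:Z) *+ c.
Proof.
move=> hf; elim: c => [|c IH]; first by rewrite muln0 big_geq.
rewrite mulnS addnC (big_cat_nat _ (n := Q * c)) //= ?leq_addr // IH mulrS addrC.
congr (_ + _).
rewrite -{1}[(Q * c)%N]add0n big_addn addKn.
by apply: eq_bigr => i _; rewrite PoszD per_nat.
Qed.

Lemma sum_any (f : int -> algC) (N : nat) : (0 < N)%N -> (forall n, f (n + N%:Z) = f n) ->
  \sum_(0 <= i < N) f i%:Z = 0 ->
  forall P : nat, (0 < P)%N -> (forall n, f (n + P%:Z) = f n) ->
  \sum_(0 <= i < P) f i%:Z = 0.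
Proof.
move=> N0 hN s0 P P0 hP.
have : (\sum_(0 <= i < P) f i%:Z) *+ N = 0.
  by rewrite -sum_mult // mulnC sum_mult // s0 mul0rn.
by move/eqP; rewrite mulrn_eq0 -[N == 0%N]negbK -lt0n N0 /= => /eqP.
Qed.

Lemma sum_inv (f : int -> algC) (N L : nat) : (0 < N)%N -> (forall n, f (n + N%:Z) = f n) ->
  (exists q, L * L = q * N + 1)%N -> (forall n : nat, f (L%:Z * n%:Z) = - f n%:Z) ->
  \sum_(0 <= i < N) f i%:Z = 0.
Proof.
move=> N0 hN [q hq] hL.
pose g (i : 'I_N) : 'I_N := Ordinal (ltn_pmod (L * i) N0).
have gg : cancel g g.
  move=> i; apply: val_inj => /=.
  rewrite modnMmr mulnA hq mulnDl mul1n mulnAC modnMDl.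
  by rewrite modn_small.
have fg : forall i, f (g i)%:Z = - f i%:Z.
  move=> i /=; rewrite -hL.
  rewrite -PoszM [in RHS](divn_eq (L * i) N) PoszD addrC.
  by rewrite -[((L * i) %/ N * N)%N]mulnC (per_nat _ _ hN).
have S : \sum_(0 <= i < N) f i%:Z = - \sum_(0 <= i < N) f i%:Z.
  rewrite big_mkord -sumrN (reindex_inj (can_inj gg)) /=.
  by apply: eq_bigr => i _; rewrite fg.
have : (\sum_(0 <= i < N) f i%:Z) *+ 2 == 0 by rewrite mulr2n {1}S addNr.
by rewrite mulrn_eq0 /= => /eqP.
Qed.


Lemma PoszX (n m : nat) : (n ^ m)%N%:Z = n%:Z ^+ m.
Proof. elim: m => [|m IH]; by rewrite ?expn0 ?expr0 // expnS exprS PoszM IH. Qed.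

Lemma chiE t n : chi t n = chiw (2 ^+ t) n.
Proof.
rewrite /chi /chiw /= !eqz_mod_dvd !exprS.
have -> : 3 * (2 * 2 ^+ t) = 6 * 2 ^+ t :> int by ring.
have -> : 2 * (2 * 2 ^+ t) = 4 * 2 ^+ t :> int by ring.
by [].
Qed.

Lemma expoE t n : expo t n = expw (2 ^+ t) n.
Proof.
rewrite /expo /expw !exprS.
by have -> : 3 * (2 * (2 * 2 ^+ t)) = 12 * 2 ^+ t :> int by ring.
Qed.

Lemma twistedE t zeta n : twisted t zeta n = twistedw (2 ^+ t) zeta n.
Proof. by rewrite /twisted /twistedw chiE expoE. Qed.

Theorem proposition2p2 (t : nat) (ht : (2 <= t)%N) :
  (forall n : int, chi t n != 0 ->
     (3 * 2 ^+ t.+2 %| n ^+ 2 - (2 ^+ t.+1 - 3) ^+ 2)%Z) /\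
  (forall zeta : algC, (exists k : nat, (0 < k)%N /\ zeta ^+ k = 1) ->
     (exists P : nat, (0 < P)%N /\
        forall n : int, twisted t zeta (n + P%:Z) = twisted t zeta n) /\
     (forall P : nat, (0 < P)%N ->
        (forall n : int, twisted t zeta (n + P%:Z) = twisted t zeta n) ->
        \sum_(0 <= i < P) twisted t zeta i%:Z = 0)).
Proof.
set w : int := 2 ^+ t.
have w4 : 4 <= w.
  rewrite /w -(subnK ht) exprD.
  have : 1 <= 2 ^+ (t - 2) :> int by rewrite exprn_ege1.
  rewrite (_ : 2 ^+ 2 = 4) //; lia.
have w0 : 0 < w by lia.
have wn0 : w != 0 by rewrite gt_eqF.
have cop : coprimez 3 (2 * w) by rewrite coprimezMr coprimezXr.
split.
  move=> n; rewrite chiE -/w => c0.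
  have -> : 3 * 2 ^+ t.+2 = 12 * w :> int by rewrite /w !exprS; ring.
  have -> : 2 ^+ t.+1 = 2 * w :> int by rewrite /w !exprS.
  by apply/dvdzP; exists (expw w n); rewrite expw_exact.
move=> zeta [k [k0 hk]].
set N := (12 * 2 ^ t * k)%N.
have NZ : N%:Z = 12 * w * k%:Z by rewrite /N !PoszM PoszX.
have N0 : (0 < N)%N by rewrite /N !muln_gt0 expn_gt0.
have hper : forall n : int, twisted t zeta (n + N%:Z) = twisted t zeta n.
  by move=> n; rewrite !twistedE -/w NZ twist_per.
split; first by exists N.
apply: (sum_any _ _ N0 hper).
have [m cm km] := pfactor_coprime (isT : prime 2) k0.
set c := logn 2 k in km.
have m0 : (0 < m)%N by move: k0; rewrite km muln_gt0 => /andP[].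
have cop2 : coprime (2 ^ (t + c)) (3 * m) by rewrite coprimeXl // coprimeMr cm.
have ph0 : (0 < totient (3 * m))%N by rewrite totient_gt0 muln_gt0.
have He := Euler_exp_totient cop2.
rewrite (modn_small (_ : 1 < 3 * m)%N) in He; last by lia.
set X := ((2 ^ (t + c)) ^ (totient (3 * m)).-1)%N.
set Y := ((2 ^ (t + c)) ^ (totient (3 * m)) %/ (3 * m))%N.
have hX : (X * 2 ^ t * 2 ^ c = Y * (3 * m) + 1)%N.
  by rewrite -mulnA -expnD /X -expnSr prednK // {1}(divn_eq ((2 ^ (t + c)) ^ (totient (3 * m))) (3 * m)) He.
clearbody X Y.
have hXz := congr1 Posz hX; rewrite !PoszM PoszD !PoszX -/w in hXz.
set L := (6 * Y * m + 1)%N.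
have LZ : L%:Z = 6 * Y%:Z * m%:Z + 1 by rewrite /L PoszD !PoszM.
have kZ : k%:Z = m%:Z * 2 ^+ c by rewrite km PoszM PoszX.
apply: (sum_inv _ _ L N0 hper).
  exists (X * Y)%N.
  have -> : (X * Y * N = 12 * Y * m * (X * 2 ^ t * 2 ^ c))%N by rewrite /N km; ring.
  by rewrite hX /L; ring.
move=> n; rewrite !twistedE -/w.
apply: (twist_L _ _ _ _ _ w4 cop _ _ k0 hk).
- apply/dvdzP; exists (X%:Z * 2 ^+ c).
  transitivity (2 * (X%:Z * w * 2 ^+ c)); last by ring.
  by rewrite hXz LZ; ring.
- by apply/dvdzP; exists (2 * Y%:Z * m%:Z); rewrite LZ; ring.
- apply/dvdzP; exists (X%:Z * Y%:Z).
  transitivity (12 * Y%:Z * m%:Z * (X%:Z * w * 2 ^+ c)); last by rewrite kZ; ring.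
  by rewrite hXz LZ; ring.
Qed.
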